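(* Let $n\ge 3$. The reciprocal status Hosoya polynomial of the power graph $P(G(n))$ of the gyrogroup $G(n)$ (defined in the context) is $$H_{rs}(P(G(n)),x)=(2^{n-1}-1)x^{\frac{2^{n+2}-2^{n-1}-4}{2}}+2^{n-1}x^{2^n+2^{n-1}-1}+\binom{2^{n-1}-1}{2}x^{2^n+2^{n-1}-2}.$$
   Context: Let $n\ge 3$ be an integer and $m=2^{n-1}$. Let $P(n)=\{0,1,\dots,m-1\}$, $H(n)=\{m,m+1,\dots,2^n-1\}$ and $G(n)=P(n)\cup H(n)$. For $i,j\in G(n)$ let $t,s,k\in P(n)$ be the residues modulo $m$ (taken in $\{0,\dots,m-1\}$) of $i+j$, $i+(\frac m2-1)j$ and $(\frac m2+1)i+(\frac m2-1)j$, respectively, and define $i\oplus j=t$ if $i,j\in P(n)$; $i\oplus j=t+m$ if $i\in P(n),j\in H(n)$; $i\oplus j=s+m$ if $i\in H(n),j\in P(n)$; $i\oplus j=k$ if $i,j\in H(n)$. Then $(G(n),\oplus)$ is a gyrogroup with identity $e=0$. Powers are defined by $a^1=a$, $a^{k+1}=a^k\oplus a$. The power graph $P(G(n))$ is the simple undirected graph with vertex set $G(n)$ in which distinct vertices $u,v$ are adjacent if and only if $u^k=v$ or $v^k=u$ for some positive integer $k$. For a connected graph $G$ with distance $d$, the reciprocal status of a vertex $v$ is $rs(v)=\sum_{u\in V(G),u\ne v}\frac{1}{d(u,v)}$, and the reciprocal status Hosoya polynomial is $H_{rs}(G,x)=\sum_{uv\in E(G)}x^{rs(u)+rs(v)}$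 (sum over edges). *)

(* Defs.v *)
From HB Require Import structures.
From mathcomp Require Import all_boot all_order all_algebra.
From mathcomp Require Import boolp.
Set Implicit Arguments.
Unset Strict Implicit.
Unset Printing Implicit Defensive.
Import GRing.Theory Num.Theory.

Definition hm (n : nat) : nat := 2 ^ n.-1.

(* The gyrogroup operation on G(n) = {0,...,2^n - 1} (as naturals).
   P(n) = {i | i < m}, H(n) = {i | m <= i < 2^n}. *)
Definition gop (n : nat) (i j : nat) : nat :=
  let m := hm n in
  if i < m then
    if j < m then (i + j) %% m
    else (i + j) %% m + m
  else
    if j < m then (i + (m./2 - 1) * j) %% m + m
    else ((m./2 + 1) * i + (m./2 - 1) * j) %% m.

(* a^k for k >= 1 : a^1 = a, a^(k+1) = a^k (+) a *)
Definition gpow (n : nat) (a : nat) (k : nat) : nat :=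
  iter k.-1 (fun x => gop n x a) a.

Definition vert (n : nat) := 'I_(2 ^ n).

Definition padj (n : nat) (u v : vert n) : bool :=
  (u != v) &&
  `[< (exists k, 0 < k /\ gpow n u k = v) \/ (exists k, 0 < k /\ gpow n v k = u) >].

Fixpoint ball (n : nat) (k : nat) (u : vert n) {struct k} : {set vert n} :=
  match k with
  | 0 => [set u]
  | k'.+1 => @ball n k' u :|: [set w | [exists x in @ball n k' u, padj x w]]
  end.

(* graph distance: least k with v in the ball of radius k around u
   (distances in a connected graph on 2^n vertices are < 2^n) *)
Definition dist (n : nat) (u v : vert n) : nat :=
  find (fun k => v \in @ball n k u) (iota 0 (2 ^ n)).

Definition rs (n : nat) (v : vert n) : rat :=
  (\sum_(u : vert n | u != v) ((dist u v)%:R)^-1)%R.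

(* H_rs(P(G(n)), x) as a formal generalized polynomial: coefficient of x^q
   is the number of edges uv with rs(u) + rs(v) = q. *)
Definition Hrs_coef (n : nat) (q : rat) : nat :=
  #|[set p : vert n * vert n |
      [&& (nat_of_ord p.1 < nat_of_ord p.2), padj p.1 p.2 & (rs p.1 + rs p.2 == q)%R]]|.

(* Main.v *)
Require Import Defs.
From HB Require Import structures.
From mathcomp Require Import all_boot all_order all_algebra.
From mathcomp Require Import zify ring boolp.
Set Implicit Arguments.
Unset Strict Implicit.
Unset Printing Implicit Defensive.
Import GRing.Theory.

Lemma hm_facts n : 3 <= n -> [/\ hm n = 2 * 2 ^ (n - 2), 2 ^ n = 2 * hm n,
   (hm n)./2 = 2 ^ (n - 2), 2 <= 2 ^ (n-2) & 2 ^ (n - 1) = hm n].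
Proof.
move=> hn; rewrite /hm.
have e1 : n.-1 = (n - 2).+1 by lia.
have e2 : n = (n - 2).+2 by lia.
have h2 : 2 <= 2 ^ (n - 2).
  by rewrite -{1}(expn1 2) leq_exp2l //; lia.
split => //.
- by rewrite e1 expnS.
- by rewrite {1}e2 e1 !expnS.
- by rewrite e1 expnS mul2n doubleK.
- by rewrite subn1.
Qed.

Lemma gpowP n a k : 0 < hm n -> a < hm n -> gpow n a k.+1 = (k.+1 * a) %% hm n.
Proof.
move=> m0 ha; elim: k => [|k IH]; first by rewrite mul1n modn_small.
rewrite /gpow /= -/(gpow n a k.+1) IH /gop ltn_pmod // ha.
by rewrite modnDml mulSn addnC.
Qed.

Lemma gpowH n a k : 3 <= n -> hm n <= a < 2 ^ n ->
  gpow n a k.+1 = if odd k then 0 else a.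
Proof.
move=> hn /andP[h1 h2]; case: (hm_facts hn) => e1 e2 e3 e4 e5.
elim: k => [|k IH]; first by [].
rewrite /gpow /= -/(gpow n a k.+1) IH /=.
case: (odd k) => /=; rewrite /gop.
- have -> : 0 < hm n by lia.
  rewrite ltnNge h1 /= add0n -{1}(subnK h1) modnDr modn_small; lia.
- rewrite ltnNge h1 /= e3.
  have -> : (2 ^ (n - 2) + 1) * a + (2 ^ (n - 2) - 1) * a = hm n * a.
    rewrite -mulnDl e1; congr (_ * _); lia.
  by rewrite modnMr.
Qed.

Definition reach n a b := exists k, 0 < k /\ gpow n a k = b.

Lemma reach_out n a b : 3 <= n -> a < 2 ^ n -> reach n a b -> a != b ->
  (a < hm n) && (b < hm n) || (b == 0).
Proof.
move=> hn ha [[|k] [//= _ <-]] neq; case: (hm_facts hn) => e1 e2 e3 e4 e5.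
case: (boolP (a < hm n)) => h.
- rewrite gpowP ?h ?ltn_pmod //=; lia.
- move: neq; rewrite gpowH //=; last by lia.
  by case: (odd k); rewrite ?eqxx //= orbT.
Qed.

Lemma reach0 n a : 3 <= n -> a < 2 ^ n -> reach n a 0.
Proof.
move=> hn ha; case: (hm_facts hn) => e1 e2 e3 e4 e5.
case: (boolP (a < hm n)) => h.
- exists (hm n); split; first lia.
  have -> : hm n = (hm n).-1.+1 by lia.
  rewrite gpowP -?(S_pred _ 0) //; try lia.
  rewrite prednK ?modnMr //; lia.
- exists 2; split => //; rewrite gpowH //; lia.
Qed.

Lemma reach0' n a b : 3 <= n -> a < 2 ^ n -> b = 0 -> reach n a b.
Proof. by move=> hn ha ->; apply: reach0. Qed.

Lemma reach_div n u v : 3 <= n -> 0 < u < hm n -> v < hm n ->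
  gcdn u (hm n) %| v -> reach n u v.
Proof.
move=> hn /andP[u0 um] vm dv; case: (hm_facts hn) => e1 e2 e3 e4 e5.
case: (egcdnP (hm n) u0) => km kn E _.
set g := gcdn u (hm n) in E dv.
have vE := divnK dv; set c := v %/ g in vE.
exists (c * km + hm n); split; first lia.
have hk : 0 < c * km + hm n by lia.
rewrite -(prednK hk) gpowP ?(prednK hk); try lia.
have -> : (c * km + hm n) * u = (c * kn + u) * hm n + v.
  rewrite -vE mulnDl -mulnA E; nia.
by rewrite modnMDl modn_small.
Qed.

Lemma gcd_pow n u : 3 <= n -> exists2 e, e <= n - 1 & gcdn u (hm n) = 2 ^ e.
Proof.
move=> hn; case: (hm_facts hn) => e1 e2 e3 e4 e5.
have : gcdn u (hm n) %| 2 ^ (n - 1) by rewrite e5 dvdn_gcdr.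
by case/(dvdn_pfactor _ _ (isT : prime 2)) => e le ->; exists e.
Qed.

Lemma reachPP n u v : 3 <= n -> 0 < u < hm n -> 0 < v < hm n ->
  reach n u v \/ reach n v u.
Proof.
move=> hn hu hv; case: (gcd_pow u hn) => e1 _ E1; case: (gcd_pow v hn) => e2 _ E2.
case: (leqP e1 e2) => le.
- left; apply: reach_div => //; first by case/andP: hv.
  apply: (dvdn_trans _ (dvdn_gcdl v (hm n))); rewrite E1 E2 dvdn_exp2l //.
- right; apply: reach_div => //; first by case/andP: hu.
  apply: (dvdn_trans _ (dvdn_gcdl u (hm n))); rewrite E1 E2 dvdn_exp2l //; lia.
Qed.

Lemma padjE n (u v : vert n) : 3 <= n ->
  padj u v = (u != v) && ((u < hm n) && (v < hm n) || (val u == 0) || (val v == 0)).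
Proof.
move=> hn; rewrite /padj; case: eqP => //= /eqP neq.
have neq' : (val u != val v) by [].
apply/asboolP/idP.
- case=> [R|R].
  + by case/orP: (reach_out hn (ltn_ord u) R neq') => ->; rewrite ?orbT.
  + rewrite eq_sym in neq'.
    case/orP: (reach_out hn (ltn_ord v) R neq') => [/andP[-> ->]|->] //.
    by rewrite orbT.
- case/orP => [/orP[/andP[hu hv]|/eqP u0]|/eqP v0].
  + case: (posnP u) => [u0|u0].
      by right; apply: reach0' (ltn_ord v) _.
    case: (posnP v) => [v0|v0].
      by left; apply: reach0' (ltn_ord u) _.
    by apply: reachPP; rewrite ?u0 ?v0.
  + by right; apply: reach0' (ltn_ord v) _.
  + by left; apply: reach0' (ltn_ord u) _.
Qed.

Definition z n : vert n := Ordinal (expn_gt0 2 n).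

Lemma in_ball1 n (u v : vert n) : (v \in ball 1 u) = (v == u) || padj u v.
Proof.
rewrite /= !inE; congr orb; apply/existsP/idP => [[x /andP[]]|h].
  by rewrite inE => /eqP ->.
by exists u; rewrite inE eqxx.
Qed.

Lemma in_ball2 n (u v : vert n) : 3 <= n -> v \in ball 2 u.
Proof.
move=> hn; rewrite [ball 2 u]/= inE; case: (boolP (v \in ball 1 u)) => //= h.
rewrite inE; apply/existsP; exists (z n).
move: h; rewrite !in_ball1 !padjE // negb_or negb_and => /andP[nvu /orP[|]].
  by rewrite eq_sym nvu.
rewrite !negb_or => /andP[/andP[_ u0] v0].
have zu : (u == z n) = false.
  by apply/negbTE; apply/eqP => /(congr1 val) /= E; move/eqP: u0; apply.
have zv : (z n == v) = false.
  by apply/negbTE; apply/eqP => /(congr1 val) /= E; move/eqP: v0; apply.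
by rewrite eq_sym zu zv /= !orbT.
Qed.

Lemma distE n (u v : vert n) : 3 <= n ->
  dist u v = if v == u then 0 else if padj u v then 1 else 2.
Proof.
move=> hn.
have E : iota 0 (2 ^ n) = [:: 0, 1, 2 & iota 3 (2 ^ n - 3)].
  have -> : 2 ^ n = (2 ^ n - 3).+3.
    have : 2 ^ 3 <= 2 ^ n by rewrite leq_exp2l.
    lia.
  by rewrite /= subSS subSS subSS subn0.
move: (in_ball1 u v) (in_ball2 u v hn); rewrite /dist E /= => -> -> /[1!inE].
by case: (v == u); case: (padj u v).
Qed.

Lemma sum_range N a b : \sum_(i < N) (a <= i < b) = minn b N - minn a N.
Proof.
elim: N => [|N IH]; first by rewrite big_ord0; lia.
rewrite big_ord_recr /= IH.
case: (boolP (a <= N < b)) => /= h; lia.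
Qed.

Lemma sum_neq (I : finType) (v : I) (P : I -> bool) :
  \sum_(i : I) ((i != v) && P i) = \sum_(i : I) P i - P v.
Proof.
rewrite [in RHS](bigD1 v) //= (bigD1 v) //= eqxx /= add0n addKn.
by apply: eq_bigr => i ->.
Qed.

Definition deg n (v : vert n) := \sum_(u : vert n) (padj u v : nat).

Lemma deg_val n (v : vert n) : 3 <= n ->
  deg v = if val v == 0 then (2 ^ n).-1 else if v < hm n then (hm n).-1 else 1.
Proof.
move=> hn; case: (hm_facts hn) => e1 e2 e3 e4 e5.
rewrite /deg (eq_bigr (fun u : vert n => (u != v) &&
   ((u < hm n) && (v < hm n) || (val u == 0) || (val v == 0)) : nat)); last first.
  by move=> u _; rewrite padjE.
rewrite sum_neq.
case: (boolP (val v == 0)) => [v0|v0].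
  rewrite (eq_bigr (fun i : vert n => (0 <= i < 2 ^ n) : nat)); last first.
    by move=> i _; rewrite orbT ltn_ord.
  rewrite (sum_range (2 ^ n) 0 (2 ^ n)) !orbT /=; lia.
case: (boolP (v < hm n)) => [vm|vm].
  rewrite (eq_bigr (fun i : vert n => (0 <= i < hm n) : nat)); last first.
    move=> i _; rewrite andbT orbF /=.
    by case: (boolP (i < hm n)) => //=; case: eqP => // ->; lia.
  rewrite (sum_range (2 ^ n) 0 (hm n)) /=; lia.
rewrite (eq_bigr (fun i : vert n => (0 <= i < 1) : nat)); last first.
  by move=> i _; rewrite andbF orbF /=; case: (i : nat).
rewrite (sum_range (2 ^ n) 0 1) /=.
have : 1 <= 2 ^ n by rewrite expn_gt0.
lia.
Qed.

Lemma rs_val n (v : vert n) : 3 <= n -> rs v = (((2 ^ n).-1 + deg v)%N%:R / 2%:R)%R.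
Proof.
move=> hn; rewrite /rs.
rewrite (eq_bigr (fun u => ((1 + padj u v)%N%:R / 2%:R : rat)%R)); last first.
  move=> u uv; rewrite distE // eq_sym (negbTE uv).
  by case: (padj u v) => /=; field.
rewrite -mulr_suml -natr_sum big_split /= (sum1_card (predC1 v)) cardC1 card_ord.
congr (((_ + _)%N)%:R / _)%R.
rewrite /deg [in RHS](bigD1 v) //=.
have -> : padj v v = false by rewrite /padj eqxx.
by [].
Qed.

Lemma tri K : \sum_(j < K) j.-1 = 'C(K.-1, 2).
Proof.
elim: K => [|K IH]; first by rewrite big_ord0.
rewrite big_ord_recr /= IH; case: K {IH} => [|K] //=.
by rewrite binS bin1 addnC.
Qed.

Lemma SA n : 3 <= n ->
  \sum_(i : vert n) \sum_(j : vert n) (((val i == 0) && (0 < j < hm n)) : nat) = (hm n).-1.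
Proof.
move=> hn; case: (hm_facts hn) => e1 e2 e3 e4 e5.
rewrite (eq_bigr (fun i : vert n => (0 <= i < 1) * \sum_(j : vert n) (1 <= j < hm n))).
  rewrite -big_distrl /= (sum_range (2 ^ n) 0 1) !sum_range; lia.
move=> i _; rewrite big_distrr; apply: eq_bigr => j _ /=.
by rewrite mulnb; case: (i : nat).
Qed.

Lemma SB n : 3 <= n ->
  \sum_(i : vert n) \sum_(j : vert n) (((val i == 0) && (hm n <= j < 2 ^ n)) : nat) = hm n.
Proof.
move=> hn; case: (hm_facts hn) => e1 e2 e3 e4 e5.
rewrite (eq_bigr (fun i : vert n => (0 <= i < 1) * \sum_(j : vert n) (hm n <= j < 2 ^ n))).
  rewrite -big_distrl /= (sum_range (2 ^ n) 0 1) !sum_range; lia.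
move=> i _; rewrite big_distrr; apply: eq_bigr => j _ /=.
by rewrite mulnb; case: (i : nat).
Qed.

Lemma SC n : 3 <= n ->
  \sum_(i : vert n) \sum_(j : vert n) ([&& 0 < i, i < j & j < hm n] : nat) = 'C((hm n).-1, 2).
Proof.
move=> hn; case: (hm_facts hn) => e1 e2 e3 e4 e5.
rewrite exchange_big /=.
rewrite (eq_bigr (fun j : vert n => (j < hm n) * (nat_of_ord j).-1)); last first.
  move=> j _; rewrite (eq_bigr (fun i : vert n => (j < hm n) * (1 <= i < j))).
    by rewrite -big_distrr /= sum_range; congr (_ * _); have := ltn_ord j; lia.
  by move=> i _; rewrite mulnb; case: (j < hm n); rewrite ?andbT ?andbF.
rewrite -tri (big_ord_widen (2 ^ n) (fun j => j.-1)); last lia.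
by rewrite [RHS]big_mkcond; apply: eq_bigr => j _; case: (j < hm n); rewrite ?mul1n.
Qed.

Lemma rs_cases n p (v : vert n) : 3 <= n -> hm n = p + 4 ->
  rs v = (if val v == 0 then ((4 * p + 14)%N%:R / 2%:R)%R
          else if v < hm n then ((3 * p + 10)%N%:R / 2%:R)%R
          else ((2 * p + 8)%N%:R / 2%:R)%R).
Proof.
move=> hn hp; case: (hm_facts hn) => e1 e2 e3 e4 e5.
rewrite rs_val // deg_val //.
case: (val v == 0); last case: (v < hm n); congr ((_ %:R) / _)%R; lia.
Qed.

Lemma Gpt n p q (i j : vert n) : 3 <= n -> hm n = p + 4 ->
  ([&& i < j, padj i j & (rs i + rs j == q)%R] : nat) =
    ((val i == 0) && (0 < j < hm n)) * (q == ((7 * p + 24)%N%:R / 2%:R)%R)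
  + ((val i == 0) && (hm n <= j < 2 ^ n)) * (q == (3 * p + 11)%N%:R)%R
  + [&& 0 < i, i < j & j < hm n] * (q == (3 * p + 10)%N%:R)%R.
Proof.
move=> hn hp; case: (hm_facts hn) => e1 e2 e3 e4 e5.
have jN := ltn_ord j.
rewrite padjE // !(rs_cases _ hn hp).
case: (boolP (i < j)) => ij /=; last first.
  have h1 : ((val i == 0) && (0 < j)) = false.
    by apply/negbTE; apply/negP => /andP[/eqP i0 j0]; have i0' : nat_of_ord i = 0 := i0; move: ij; rewrite -leqNgt; lia.
  have h2 : ((val i == 0) && (hm n <= j)) = false.
    by apply/negbTE; apply/negP => /andP[/eqP i0 j0]; have i0' : nat_of_ord i = 0 := i0; move: ij; rewrite -leqNgt; lia.
  by rewrite !andbF !andbA h1 h2.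
have -> : (i != j) by apply/eqP => E; move: ij; rewrite E ltnn.
case: (boolP (val i == 0)) => i0 /=.
  have j0 : (val j == 0) = false by apply/negbTE; move/eqP: i0 => /= i0; lia.
  have -> : (0 < i) = false by move/eqP: i0 => /= ->.
  rewrite j0 !orbT /= mul0n addn0.
  case: (boolP (j < hm n)) => jm /=.
    rewrite (_ : 0 < j) /=; last lia.
    rewrite leqNgt jm /= mul1n mul0n addn0 eq_sym; congr (nat_of_bool (q == _)).
    rewrite -mulrDl -natrD; congr (_%:R / _)%R; lia.
  rewrite !andbF /= mul0n add0n (_ : hm n <= j) /=; last lia.
  rewrite jN mul1n eq_sym; congr (nat_of_bool (q == _)).
  rewrite -mulrDl -natrD (_ : (4 * p + 14 + (2 * p + 8) = (3 * p + 11) * 2)%N); last lia.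
  by rewrite natrM mulfK.
have ip : 0 < i by rewrite lt0n.
rewrite ip /= mul0n !add0n.
have j0 : (val j == 0) = false by apply/negbTE; rewrite -lt0n; exact: ltn_trans ip ij.
rewrite j0 !orbF.
case: (boolP (j < hm n)) => jm /=.
  have -> : i < hm n by lia.
  rewrite /= mul1n eq_sym; congr (nat_of_bool (q == _)).
  rewrite -mulrDl -natrD (_ : (3 * p + 10 + (3 * p + 10) = (3 * p + 10) * 2)%N); last lia.
  by rewrite natrM mulfK.
by rewrite andbF.
Qed.

Theorem mainTheorem5 (n : nat) (hn : 3 <= n) (q : rat) :
  Hrs_coef n q =
    (2 ^ (n - 1) - 1) * (q == (((2 ^ (n + 2))%:R - (2 ^ (n - 1))%:R - 4%:R) / 2%:R)%R)
  + 2 ^ (n - 1) * (q == ((2 ^ n + 2 ^ (n - 1) - 1)%:R)%R)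
  + 'C(2 ^ (n - 1) - 1, 2) * (q == ((2 ^ n + 2 ^ (n - 1) - 2)%:R)%R).
Proof.
case: (hm_facts hn) => e1 e2 e3 e4 e5.
pose p := hm n - 4.
have hp : hm n = p + 4 by rewrite /p; lia.
have -> : Hrs_coef n q = \sum_(i : vert n) \sum_(j : vert n)
    ([&& i < j, padj i j & (rs i + rs j == q)%R] : nat).
  rewrite pair_big /= /Hrs_coef -sum1_card big_mkcond /=.
  by apply: eq_bigr => -[i j] _; rewrite inE; case: (_ && _).
rewrite (eq_bigr (fun i : vert n =>
   (\sum_(j : vert n) (((val i == 0) && (0 < j < hm n)) : nat)) * (q == ((7 * p + 24)%N%:R / 2%:R)%R)
 + (\sum_(j : vert n) (((val i == 0) && (hm n <= j < 2 ^ n)) : nat)) * (q == (3 * p + 11)%N%:R)%R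
 + (\sum_(j : vert n) ([&& 0 < i, i < j & j < hm n] : nat)) * (q == (3 * p + 10)%N%:R)%R));
  last first.
  move=> i _; rewrite !big_distrl -!big_split /=; apply: eq_bigr => j _.
  exact: Gpt.
rewrite !big_split /= -!big_distrl /= SA // SB // SC //.
have -> : (((2 ^ (n + 2))%:R - (2 ^ (n - 1))%:R - 4%:R) / 2%:R = ((7 * p + 24)%N%:R / 2%:R : rat))%R.
  rewrite e5 expnD e2 hp; congr (_ / _)%R.
  rewrite !natrD !natrM; ring.
rewrite (_ : 2 ^ n + 2 ^ (n - 1) - 1 = 3 * p + 11); last lia.
rewrite (_ : 2 ^ n + 2 ^ (n - 1) - 2 = 3 * p + 10); last lia.
by rewrite e5 subn1.
Qed.
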